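(* Let $G$ be a simple graph and $S$ a $k$-simplicial set of $G$ such that both $G\setminus S$ and $G\setminus N_G[S]$ are $k$-shellable. Then $G$ is $k$-shellable.
   Context: $N_G(x)$ is the set of neighbours of $x$, $N_G[x]=N_G(x)\cup\{x\}$, $N_G[U]=\bigcup_{x\in U}N_G[x]$; $G\setminus U$ deletes the vertices of $U$ and incident edges; $G_U$ is the induced subgraph on $U$. A set $S$ of pairwise non-adjacent vertices of $G$ is a $k$-simplicial set if $G_{N_G[S]}$ is a complete $r$-partite graph (for some $r$) with $k$-element parts $S_1,\ldots,S_r$ such that for every part $S_l$ and every two vertices $x_i,x_j\in S_l$, $N_G(x_i)=N_G(x_j)$. A graph $H$ is $k$-shellable if its independence complex $\Delta_H$ (faces: sets of pairwise non-adjacent vertices) is. $\langle F_1,\ldots,F_s\rangle$ denotes the complex with facets $F_1,\dots,F_s$. A complex $\Gamma$ of dimension $d$ is $k$-shellable ($1\le k\le d+1$) if its facets can be ordered $F_1,\ldots,F_r$ such that for every $j=2,\ldots,r$, $\Gamma_j=\langle F_j\rangle\cap\langle F_1,\ldots,F_{j-1}\rangle$ satisfies (i) $\Gamma_j$ is generated by a nonempty set of faces of $\langle F_j\rangle$ of dimension $|F_j|-k-1$; (ii) if $\Gamma_j$ has more than one facet, then for every two distinct facets $\sigma,\tau$ of $\Gamma_j$, $F_j\subseteq\sigma\cup\tau$. *)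

(* Defs.v *)
From mathcomp Require Import all_boot.
Set Implicit Arguments. Unset Strict Implicit. Unset Printing Implicit Defensive.

Section Defs.
Variable T : finType.

(* A simple graph on the vertex set T is a symmetric irreflexive e : rel T. *)

Definition closedN (e : rel T) (U : {set T}) : {set T} :=
  U :|: [set y | [exists x in U, e x y]].

Definition independent (e : rel T) (A : {set T}) : bool :=
  [forall x in A, forall y in A, ~~ e x y].

(* independence complex of G \ U (faces = independent sets avoiding U) *)
Definition indcomplex (e : rel T) (U : {set T}) : {set {set T}} :=
  [set s : {set T} | (s \subset ~: U) && independent e s].

(* a simplicial complex is represented by its set of faces *)
Definition facets (D : {set {set T}}) : {set {set T}} :=
  [set F in D | [forall H in D, (F \subset H) ==> (H == F)]].

Definition gen (E : {set {set T}}) : {set {set T}} :=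
  [set s : {set T} | [exists F in E, s \subset F]].

(* k-shellable complex (facet sizes; dimension d = max facet size - 1) *)
Definition kshellable (k : nat) (D : {set {set T}}) : Prop :=
  (0 < k) /\ (k <= \max_(F in facets D) #|F|) /\
  exists s : seq {set T},
    uniq s /\ [set F in s] = facets D /\
    forall j, 0 < j < size s ->
      let F := nth set0 s j in
      let Gm := gen [set F] :&: gen [set H in take j s] in
      (exists E : {set {set T}}, E != set0 /\
         (forall sg, sg \in E -> sg \subset F /\ #|sg| + k = #|F|) /\
         Gm = gen E) /\
      (forall sg tau, sg \in facets Gm -> tau \in facets Gm -> sg != tau ->
         F \subset sg :|: tau).

Definition ksimplicial (e : rel T) (k : nat) (S : {set T}) : Prop :=
  independent e S /\
  exists P : {set {set T}},
    partition P (closedN e S) /\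
    (forall B, B \in P -> #|B| = k) /\
    (forall x y, x \in closedN e S -> y \in closedN e S ->
       e x y = (pblock P x != pblock P y)) /\
    (forall B x y, B \in P -> x \in B -> y \in B ->
       forall z, e x z = e y z).

End Defs.

(* Main.v *)
Require Import Defs.
From mathcomp Require Import all_boot zify.
Set Implicit Arguments. Unset Strict Implicit. Unset Printing Implicit Defensive.

Section Gen.
Variable T : finType.
Implicit Types (D E : {set {set T}}) (A B F G H X Y s : {set T}).

Lemma facetP D F : reflect (F \in D /\ forall H, H \in D -> F \subset H -> H = F)
  (F \in facets D).
Proof.
rewrite inE; apply: (iffP andP) => [[FD /forall_inP h]|[FD h]]; split => //.
  by move=> H HD FH; apply/eqP; exact: (implyP (h H HD)).
by apply/forall_inP => H HD; apply/implyP => FH; rewrite (h H HD FH).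
Qed.

Lemma genP E s : reflect (exists2 F, F \in E & s \subset F) (s \in gen E).
Proof. by rewrite inE; apply: (iffP exists_inP) => [[F]|[F]]; exists F. Qed.

Lemma gen_self E F : F \in E -> F \in gen E.
Proof. by move=> FE; apply/genP; exists F. Qed.

Lemma gen1 F s : (s \in gen [set F]) = (s \subset F).
Proof.
apply/genP/idP => [[G]|]; first by rewrite inE => /eqP->.
by move=> sF; exists F; rewrite ?inE.
Qed.

Lemma facets_gen_uniform E m : (forall X, X \in E -> #|X| = m) -> facets (gen E) = E.
Proof.
move=> hm; apply/setP => X; apply/facetP/idP => [[/genP[Y YE XY] mx]|XE].
  by rewrite -(mx Y (gen_self YE) XY).
split; first exact: gen_self.
move=> H /genP[Y YE HY] XH.
have XY : X \subset Y by apply: subset_trans HY.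
have eXY : X = Y by apply/eqP; rewrite eqEcard XY (hm _ XE) (hm _ YE) /=.
by apply/eqP; rewrite eqEsubset XH andbT; rewrite eXY.
Qed.

Lemma facet_exists D A : A \in D -> exists2 F, F \in facets D & A \subset F.
Proof.
move=> AD; case: (maxset_exists (P := mem D) AD) => F /maxsetP [FD mF] AF.
by exists F => //; apply/facetP; split.
Qed.


Definition stepP k F (L : seq {set T}) : Prop :=
  let Gm := gen [set F] :&: gen [set H in L] in
      (exists E : {set {set T}}, E != set0 /\
         (forall sg, sg \in E -> sg \subset F /\ #|sg| + k = #|F|) /\
         Gm = gen E) /\
      (forall sg tau, sg \in facets Gm -> tau \in facets Gm -> sg != tau ->
         F \subset sg :|: tau).

Lemma GmP F (L : seq {set T}) s :
  reflect (s \subset F /\ exists2 Z, Z \in L & s \subset Z)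
    (s \in gen [set F] :&: gen [set H in L]).
Proof.
rewrite in_setI gen1; apply: (iffP andP) => [[sF /genP[Z]]|[sF [Z ZL sZ]]].
  by rewrite inE => ZL sZ; split => //; exists Z.
by split => //; apply/genP; exists Z; rewrite ?inE.
Qed.

Lemma stepI k F L E : E != set0 ->
  (forall sg, sg \in E -> sg \subset F /\ #|sg| + k = #|F|) ->
  gen [set F] :&: gen [set H in L] = gen E ->
  (forall sg tau, sg \in E -> tau \in E -> sg != tau -> F \subset sg :|: tau) ->
  stepP k F L.
Proof.
move=> E0 hE eG hp; split; first by exists E.
rewrite /= eG (@facets_gen_uniform _ (#|F| - k)) //.
by move=> X XE; have [_ <-] := hE X XE; rewrite addnK.
Qed.

Lemma stepE k F L : stepP k F L -> exists E : {set {set T}}, [/\ E != set0,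
  (forall sg, sg \in E -> sg \subset F /\ #|sg| + k = #|F|),
  gen [set F] :&: gen [set H in L] = gen E &
  (forall sg tau, sg \in E -> tau \in E -> sg != tau -> F \subset sg :|: tau)].
Proof.
move=> [[E [E0 [hE eG]]] hp]; exists E; split => //.
move: hp; rewrite /= eG (@facets_gen_uniform _ (#|F| - k)) //.
by move=> X XE; have [_ <-] := hE X XE; rewrite addnK.
Qed.

End Gen.

Lemma filter_take (U : eqType) (p : pred U) (s : seq U) j x0 :
  j < size (filter p s) ->
  exists q, [/\ q < size s, nth x0 (filter p s) j = nth x0 s q, p (nth x0 s q)
             & take j (filter p s) = filter p (take q s)].
Proof.
elim: s j => [|x s IH] j //=.
case px: (p x) => /=.
  case: j => [|j] /= hj; first by exists 0; rewrite px.
  have [q [h1 h2 h3 h4]] := IH j hj.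
  by exists q.+1; rewrite /= px h4.
move=> hj; have [q [h1 h2 h3 h4]] := IH j hj.
by exists q.+1; rewrite /= px h4.
Qed.
Set Implicit Arguments. Unset Strict Implicit. Unset Printing Implicit Defensive.

Section Main.
Variables (T : finType) (e : rel T) (esym : symmetric e) (eirr : irreflexive e).
Variables (k : nat) (S : {set T}) (P : {set {set T}}).
Implicit Types (D E : {set {set T}}) (A B F G H X Y : {set T}).
Local Notation N := (closedN e S).
Hypothesis Sind : independent e S.
Hypothesis Ppart : partition P N.
Hypothesis Pk : forall B, B \in P -> #|B| = k.
Hypothesis Padj : forall x y, x \in N -> y \in N -> e x y = (pblock P x != pblock P y).
Hypothesis Psame : forall B x y, B \in P -> x \in B -> y \in B -> forall z, e x z = e y z.

Lemma indepP A : reflect (forall x y, x \in A -> y \in A -> ~~ e x y) (independent e A).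
Proof.
apply: (iffP forall_inP) => [h x y xA yA|h x xA].
  by move/forall_inP: (h x xA); apply.
by apply/forall_inP => y yA; apply: h.
Qed.

Lemma inNP x : reflect (x \in S \/ exists2 y, y \in S & e y x) (x \in N).
Proof.
rewrite /closedN !inE; apply: (iffP orP) => [[->|/exists_inP[y ys eyx]]|[->|[y ys eyx]]];
  by [left | right; exists y | left | right; apply/exists_inP; exists y].
Qed.

Lemma SsubN : S \subset N.
Proof. by apply/subsetP => x xs; apply/inNP; left. Qed.

Lemma nbrN y x : y \in S -> e y x -> x \in N.
Proof. by move=> ys eyx; apply/inNP; right; exists y. Qed.

Lemma coverP : cover P = N.
Proof. by case/and3P: Ppart => /eqP. Qed.

Lemma trivP : trivIset P.
Proof. by case/and3P: Ppart. Qed.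

Lemma adjS s x : s \in S -> x \in N -> x \notin S -> e s x.
Proof.
move=> ss xN xS; case/inNP: xN => [xs|[s' s's es'x]]; first by rewrite xs in xS.
have sN := subsetP SsubN s ss; have s'N := subsetP SsubN s' s's.
have xN : x \in N by apply: nbrN es'x.
have ess' : ~~ e s s' by move/indepP: Sind; apply.
rewrite Padj // in ess'; rewrite negbK in ess'.
by rewrite Padj // (eqP ess') -Padj.
Qed.

Lemma pblock_N y z : z \in pblock P y -> z \in N.
Proof.
move=> zy; have := same_pblock trivP zy => ezy.
by rewrite -coverP -mem_pblock ezy.
Qed.

Lemma pblockS s : s \in S -> pblock P s = S.
Proof.
move=> ss; have sN := subsetP SsubN s ss.
apply/setP => z; apply/idP/idP => [zs|zS].
  apply: contraLR isT => zS; have zN := pblock_N zs.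
  have := adjS ss zN zS; rewrite Padj // (same_pblock trivP zs).
  by rewrite eqxx.
have zN := subsetP SsubN z zS.
have esz : ~~ e s z by move/indepP: Sind; apply.
rewrite Padj // negbK in esz.
by rewrite (eqP esz) mem_pblock coverP.
Qed.

Lemma cardS : S != set0 -> #|S| = k.
Proof.
case/set0Pn => s ss; apply: Pk; rewrite -(pblockS ss).
by apply: pblock_mem; rewrite coverP (subsetP SsubN).
Qed.

Lemma indE U A : (A \in indcomplex e U) = (A \subset ~: U) && independent e A.
Proof. by rewrite inE. Qed.

Lemma indG A : (A \in indcomplex e set0) = independent e A.
Proof. by rewrite indE setC0 subsetT. Qed.

Lemma notinC U A x : A \subset ~: U -> x \in A -> x \notin U.
Proof. by move=> AU xA; have := subsetP AU x xA; rewrite inE. Qed.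

Lemma indep_add A z : independent e A -> (forall w, w \in A -> ~~ e z w) ->
  independent e (z |: A).
Proof.
move=> /indepP iA hz; apply/indepP => x y; rewrite !inE.
case/orP=> [/eqP->|xA]; case/orP=> [/eqP->|yA].
- by rewrite eirr.
- by apply: hz.
- by rewrite esym; apply: hz.
- by apply: iA.
Qed.

Lemma blockF F y : F \in facets (indcomplex e S) -> y \in F -> y \in N ->
  F :&: N = pblock P y.
Proof.
case/facetP => FD mF yF yN; move: (FD); rewrite indE => /andP[FS /indepP iF].
have yS := notinC FS yF.
apply/setP => z; rewrite inE; apply/andP/idP => [[zF zN]|zy].
  have := iF _ _ yF zF; rewrite Padj // negbK eq_pblock ?coverP //; exact: trivP.
have zN := pblock_N zy; split => //.
have ezy := same_pblock trivP zy.
have zS : z \notin S.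
  apply: contraNN yS => zS; rewrite -(pblockS zS) ezy mem_pblock coverP //.
have yP : pblock P y \in P by rewrite pblock_mem ?coverP.
have yy : y \in pblock P y by rewrite mem_pblock coverP.
have hz : forall w, w \in F -> ~~ e z w.
  by move=> w wF; rewrite (Psame yP zy yy); apply: iF.
have zFD : z |: F \in indcomplex e S.
  rewrite indE indep_add //; last by move: FD; rewrite indE => /andP[].
  by rewrite subUset sub1set inE zS FS.
by rewrite -(mF _ zFD (subsetUr _ _)) setU11.
Qed.

Lemma cardFN F y : F \in facets (indcomplex e S) -> y \in F -> y \in N ->
  #|F :&: N| = k.
Proof.
move=> Ff yF yN; rewrite (blockF Ff yF yN); apply: Pk.
by rewrite pblock_mem ?coverP.
Qed.

Lemma indep_sub A B : A \subset B -> independent e B -> independent e A.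
Proof.
move=> AB /indepP iB; apply/indepP => x z xA zA.
by apply: iB; apply: (subsetP AB).
Qed.

Lemma D1_G F y : F \in facets (indcomplex e S) -> y \in F -> y \in N ->
  F \in facets (indcomplex e set0).
Proof.
move=> Ff yF yN; case/facetP: (Ff) => FD mF.
move: (FD); rewrite indE => /andP[FS iF].
apply/facetP; split; first by rewrite indG.
move=> K; rewrite indG => iK FK.
apply: mF => //; rewrite indE iK andbT.
apply/subsetP => s sK; rewrite inE; apply/negP => ss.
have yS := notinC FS yF.
have := adjS ss yN yS; move/indepP: iK => iK.
by rewrite (negbTE (iK _ _ sK (subsetP FK y yF))).
Qed.

Lemma indep_SH H : H \subset ~: N -> independent e H -> independent e (S :|: H).
Proof.
move=> HN /indepP iH; apply/indepP => x y; rewrite !inE.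
have hSH : forall s h, s \in S -> h \in H -> ~~ e s h.
  move=> s h ss hH; apply/negP => esh.
  by have := notinC HN hH; rewrite (nbrN ss esh).
case/orP=> [xs|xH]; case/orP=> [ys|yH].
- by move/indepP: Sind; apply.
- by apply: hSH.
- by rewrite esym; apply: hSH.
- by apply: iH.
Qed.

Lemma A_G H : S != set0 -> H \in facets (indcomplex e N) ->
  S :|: H \in facets (indcomplex e set0).
Proof.
move=> S0 /facetP[HD mH]; move: (HD); rewrite indE => /andP[HN iH].
apply/facetP; split; first by rewrite indG indep_SH.
move=> K; rewrite indG => iK SHK.
have KD : K :\: N \in indcomplex e N.
  by rewrite indE (indep_sub _ iK) ?subsetDl // andbT; apply/subsetP => z;
    rewrite !inE => /andP[].
have HK : H \subset K :\: N.
  apply/subsetP => z zH; rewrite inE (notinC HN zH) (subsetP SHK) //.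
  by rewrite inE zH orbT.
have eKH := mH _ KD HK.
apply/eqP; rewrite eqEsubset SHK andbT; apply/subsetP => z zK; rewrite inE.
case: (boolP (z \in N)) => zN; last by rewrite -eKH inE zN zK orbT.
case: (boolP (z \in S)) => // zS; case/set0Pn: S0 => s ss.
have := adjS ss zN zS; move/indepP: iK => iK.
by rewrite (negbTE (iK _ _ (subsetP SHK s _) zK)) // inE ss.
Qed.

Lemma G_split F : S != set0 -> F \in facets (indcomplex e set0) ->
  (F = S :|: (F :\: N) /\ F :\: N \in facets (indcomplex e N)) \/
  (F \in facets (indcomplex e S) /\ exists2 y, y \in F & y \in N).
Proof.
move=> S0 /facetP[FD mF]; move: (FD); rewrite indG => iF.
have iF' := iF; move/indepP in iF'.
case: (boolP [exists s in S, s \in F]) => [/exists_inP[s ss sF]|noS].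
  left.
  have SF : S \subset F.
    apply/subsetP => s' s's.
    have hD : s' |: F \in indcomplex e set0.
      rewrite indG indep_add // => w wF; apply/negP => es'w.
      have wN := nbrN s's es'w.
      case: (boolP (w \in S)) => wS.
        by move/indepP: Sind => iS; have := iS _ _ s's wS; rewrite es'w.
      by have := iF' _ _ sF wF; rewrite (adjS ss wN wS).
    by rewrite -(mF _ hD (subsetUr _ _)) setU11.
  have eF : F = S :|: (F :\: N).
    apply/eqP; rewrite eqEsubset [X in _ && X]subUset SF subsetDl !andbT.
    apply/subsetP => z zF; rewrite in_setU in_setD zF andbT.
    case: (boolP (z \in N)) => zN; rewrite /= ?orbF ?orbT //.
    apply: contraLR isT => zS; have := iF' _ _ sF zF.
    by rewrite (adjS ss zN zS).
  split => //.
  have FND : F :\: N \in indcomplex e N.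
    rewrite indE (indep_sub (subsetDl _ _) iF) andbT.
    by apply/subsetP => z; rewrite !inE => /andP[].
  apply/facetP; split => // K KD FNK.
  move: (KD); rewrite indE => /andP[KN iK].
  have hD : S :|: K \in indcomplex e set0 by rewrite indG indep_SH.
  have FSK : F \subset S :|: K by rewrite {1}eF setUS.
  have eSK := mF _ hD FSK.
  apply/eqP; rewrite eqEsubset FNK andbT; apply/subsetP => z zK.
  rewrite inE (notinC KN zK) /= -eSK inE zK orbT //.
right.
have FS : F \subset ~: S.
  apply/subsetP => z zF; rewrite inE; apply: contraNN noS => zS.
  by apply/exists_inP; exists z.
have FD1 : F \in indcomplex e S by rewrite indE FS iF.
split.
  apply/facetP; split => // K; rewrite indE => /andP[_ iK].
  by apply: mF; rewrite indG.
case/set0Pn: S0 => s ss.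
case: (boolP [exists y in F, y \in N]) => [/exists_inP[y yF yN]|noN].
  by exists y.
have hD : s |: F \in indcomplex e set0.
  rewrite indG indep_add // => w wF; apply/negP => esw.
  by move/negP: noN; apply; apply/exists_inP; exists w => //; apply: nbrN esw.
have := mF _ hD (subsetUr _ _) => eF.
by move/negP: noS; case; apply/exists_inP; exists s => //; rewrite -eF setU11.
Qed.

Lemma notS_of H z : H \subset ~: N -> z \in H -> z \notin S.
Proof. by move=> HN zH; apply: contraNN (notinC HN zH); apply: (subsetP SsubN). Qed.

Lemma cardSH H : H \subset ~: N -> #|S :|: H| = #|S| + #|H|.
Proof.
move=> HN; rewrite cardsU; have -> : S :&: H = set0.
  by apply/setP => z; rewrite !inE; apply/negP => /andP[zS zH]; rewrite (negbTE (notS_of HN zH)) in zS.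
by rewrite cards0 subn0.
Qed.

Lemma SHdiff H : H \subset ~: N -> (S :|: H) :\: S = H.
Proof.
move=> HN; apply/setP => z; rewrite in_setD in_setU.
case zH: (z \in H); last by rewrite orbF; case: (z \in S).
by rewrite (negbTE (notS_of HN zH)).
Qed.

Lemma facD0 H : H \in facets (indcomplex e N) -> H \subset ~: N.
Proof. by case/facetP; rewrite indE => /andP[]. Qed.

Lemma facD1 F : F \in facets (indcomplex e S) -> F \subset ~: S.
Proof. by case/facetP; rewrite indE => /andP[]. Qed.


Lemma main_shell : S != set0 -> kshellable k (indcomplex e S) ->
  kshellable k (indcomplex e N) -> kshellable k (indcomplex e set0).
Proof.
move=> S0 [k0 [_ [s1 [u1 [e1 h1]]]]] [_ [kmax0 [s0 [u0 [e0 h0]]]]].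
have in0 : forall H, (H \in s0) = (H \in facets (indcomplex e N)).
  by move=> H; rewrite -e0 inE.
have in1 : forall H, (H \in s1) = (H \in facets (indcomplex e S)).
  by move=> H; rewrite -e1 inE.
pose f := fun H => S :|: H.
pose sA := map f s0.
pose sB := filter (mem (facets (indcomplex e set0))) s1.
have inA : forall X, X \in sA -> exists2 H, H \in facets (indcomplex e N) & X = S :|: H.
  by move=> X /mapP[H Hs ->]; exists H; rewrite -?in0.
have inB : forall X, (X \in sB) = (X \in facets (indcomplex e S)) && (X \in facets (indcomplex e set0)).
  by move=> X; rewrite mem_filter andbC in1.
split => //; split.
  have h0D : set0 \in indcomplex e N.
    by rewrite indE sub0set; apply/indepP => x y; rewrite inE.
  have [H0 H0f _] := facet_exists h0D.
  rewrite -(cardS S0); apply: leq_trans (subset_leq_card (subsetUl S H0)) _.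
  by apply: leq_bigmax_cond; apply: A_G.
exists (sA ++ sB); split.
  rewrite cat_uniq filter_uniq // andbT; apply/andP; split.
    rewrite map_inj_in_uniq // => H H' Hs H's /= eHH'.
    move: Hs H's; rewrite !in0 => Hs H's.
    by rewrite -(SHdiff (facD0 Hs)) -/(f H) eHH' /f SHdiff // facD0.
  apply/hasPn => X; rewrite inB => /andP[X1 _]; apply/negP => /inA[H _ eX].
  case/set0Pn: S0 => z zS; have := subsetP (facD1 X1) z; rewrite eX inE zS => /(_ isT).
  by rewrite inE zS.
split.
  apply/setP => X; rewrite inE mem_cat; apply/orP/idP => [[/inA[H Hf ->]|]|XG].
  - exact: A_G.
  - by rewrite inB => /andP[].
  case: (G_split S0 XG) => [[eX XN]|[X1 _]]; last by right; rewrite inB X1.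
  by left; rewrite eX; apply: map_f; rewrite in0.
move=> j /andP[j0 js].
change (stepP k (nth set0 (sA ++ sB) j) (take j (sA ++ sB))).
rewrite nth_cat take_cat size_map.
case: ltnP => [jA | jA].
  rewrite (nth_map set0) // -map_take.
  have := h0 j; rewrite j0 jA => /(_ isT) /stepE [E0 [E00 hE0 eG0 hp0]].
  set H := nth set0 s0 j.
  have Hf : H \in facets (indcomplex e N) by rewrite -in0 mem_nth.
  have HN := facD0 Hf.
  apply: (stepI (E := f @: E0)).
  - by rewrite imset_eq0.
  - move=> _ /imsetP[sg sgE ->]; have [sgH sgk] := hE0 _ sgE.
    split; first by rewrite setUS.
    by rewrite /f !cardSH // ?(subset_trans sgH HN) // -addnA sgk.
  - apply/setP => t; apply/GmP/genP.
      move=> [tF [Z /mapP[H' H's ->] tZ]].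
      have : t :\: S \in gen E0.
        rewrite -eG0; apply/GmP; split; first by rewrite subDset.
        by exists H' => //; rewrite subDset.
      case/genP => sg sgE tsg; exists (f sg); first exact: imset_f.
      by rewrite -subDset.
    move=> [_ /imsetP[sg sgE ->] tsg].
    have : sg \in gen E0 by apply: gen_self.
    rewrite -eG0 => /GmP [sgH [H' H's sgH']].
    split; first by apply: subset_trans tsg _; rewrite setUS.
    exists (f H'); first by apply: map_f.
    by apply: subset_trans tsg _; rewrite setUS.
  - move=> _ _ /imsetP[sg sgE ->] /imsetP[tau tauE ->] ne.
    have ne' : sg != tau by apply: contraNN ne => /eqP->.
    have Hsub := hp0 _ _ sgE tauE ne'.
    by rewrite /f setUACA setUid setUS.
have j'B : j - size s0 < size sB.
  by move: js; rewrite size_cat size_map => js; rewrite ltn_subLR.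
have [q [qs eF pF eT]] := filter_take set0 j'B.
rewrite eF eT.
set F := nth set0 s1 q.
have F1 : F \in facets (indcomplex e S) by rewrite -in1 mem_nth.
have FG : F \in facets (indcomplex e set0) := pF.
have FS := facD1 F1.
have iF : independent e F by case/facetP: F1; rewrite indE => /andP[].
have [y yF yN] : exists2 y, y \in F & y \in N.
  case: (G_split S0 FG) => [[eFS _]|[_ //]].
  case/set0Pn: S0 => z zS; have := subsetP FS z; rewrite eFS inE zS /= => /(_ isT).
  by rewrite inE zS.
set X := F :\: N.
have cardX : #|X| + k = #|F| by rewrite -(cardFN F1 yF yN) addnC cardsID.
have XF : X \subset F := subsetDl _ _.
have XD0 : X \in indcomplex e N.
  rewrite indE (indep_sub XF iF) andbT.
  by apply/subsetP => z; rewrite in_setD in_setC => /andP[].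
pose Gm := gen [set F] :&: gen [set H in sA ++ filter (mem (facets (indcomplex e set0))) (take q s1)].
have hX : forall t : {set T}, t \subset X -> t \in Gm.
  move=> t tX; have [H' H'f XH'] := facet_exists XD0.
  apply/GmP; split; first exact: subset_trans tX XF.
  exists (S :|: H'); first by rewrite mem_cat map_f // in0.
  by apply: subset_trans tX (subset_trans XH' (subsetUr _ _)).
have GmEq : forall t : {set T}, reflect (t \subset X \/ t \in gen [set F] :&: gen [set H in take q s1])
    (t \in Gm).
  move=> t; apply: (iffP idP).
    case/GmP => tF [Z]; rewrite mem_cat => /orP[/inA[H' H'f ->] tZ|].
      left; apply/subsetP => z zt; rewrite in_setD (subsetP tF z zt) andbT.
      have zS := notinC FS (subsetP tF z zt).
      have := subsetP tZ z zt; rewrite in_setU (negbTE zS) /= => zH'.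
      by have := notinC (facD0 H'f) zH'.
    by rewrite mem_filter => /andP[_ Zt] tZ; right; apply/GmP; split => //; exists Z.
  case=> [|/GmP [tF [Z Zt tZ]]]; first exact: hX.
  case ZG: (Z \in facets (indcomplex e set0)).
    by apply/GmP; split => //; exists Z => //; rewrite mem_cat; apply/orP; right; rewrite mem_filter Zt andbT; exact: ZG.
  have Z1 : Z \in facets (indcomplex e S) by rewrite -in1 (mem_take Zt).
  apply: hX; apply/subsetP => z zt; rewrite in_setD (subsetP tF z zt) andbT.
  apply/negP => zN; have := D1_G Z1 (subsetP tZ z zt) zN.
  by rewrite ZG.
change (stepP k F (sA ++ filter (mem (facets (indcomplex e set0))) (take q s1))).
have GmE : gen [set F] :&: gen [set H in sA ++ filter (mem (facets (indcomplex e set0))) (take q s1)] = Gm by [].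
case: (posnP q) => [q0|qpos].
  apply: (stepI (E := [set X])).
  - by apply/set0Pn; exists X; rewrite inE.
  - by move=> sg; rewrite inE => /eqP->.
  - rewrite GmE; apply/setP => t; rewrite gen1; apply/GmEq/idP => [[//|]|->]; last by left.
    by case/GmP => _ [Z]; rewrite q0 take0.
  - by move=> sg tau; rewrite !inE => /eqP-> /eqP->; rewrite eqxx.
have := h1 q; rewrite qpos qs => /(_ isT) /stepE [E1 [E10 hE1 eG1 hp1]].
have key : forall tau, tau \in E1 -> tau != X -> F \subset X :|: tau.
  move=> tau tauE ntX.
  have [tauF tauk] := hE1 _ tauE.
  have := gen_self tauE; rewrite -eG1 => /GmP [_ [Z Zt tauZ]].
  have Z1 : Z \in facets (indcomplex e S) by rewrite -in1 (mem_take Zt).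
  case: (boolP [exists z in tau, z \in N]) => [/exists_inP[z ztau zN] | none].
    have eFZ : F :&: N = Z :&: N.
      by rewrite (blockF F1 (subsetP tauF z ztau) zN) (blockF Z1 (subsetP tauZ z ztau) zN).
    have UG : tau :|: (F :&: N) \in gen E1.
      rewrite -eG1; apply/GmP; split; first by rewrite subUset tauF subsetIl.
      by exists Z => //; rewrite subUset tauZ eFZ subsetIl.
    case/genP: UG => sg sgE Usg.
    have [_ sgk] := hE1 _ sgE.
    have etU : tau == tau :|: (F :&: N).
      rewrite eqEcard subsetUl /=.
      apply: leq_trans (subset_leq_card Usg) _.
      by rewrite -(leq_add2r k) sgk tauk.
    apply/subsetP => w wF; rewrite in_setU in_setD wF andbT.
    case: (boolP (w \in N)) => wN //=.
    by rewrite (eqP etU) in_setU in_setI wF wN orbT.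
  have tX : tau \subset X.
    apply/subsetP => z ztau; rewrite in_setD (subsetP tauF z ztau) andbT.
    by apply: contraNN none => zN; apply/exists_inP; exists z.
  have : tau == X by rewrite eqEcard tX /= -(leq_add2r k) cardX tauk.
  by rewrite (negbTE ntX).
apply: (stepI (E := X |: E1)).
- by apply/set0Pn; exists X; rewrite setU11.
- move=> sg; rewrite in_setU1 => /orP[/eqP->|]; first by [].
  exact: hE1.
- rewrite GmE; apply/setP => t; apply/GmEq/genP.
    case=> [tX|]; first by exists X; rewrite ?setU11.
    rewrite eG1 => /genP[sg sgE tsg]; exists sg => //; exact: setU1r.
  move=> [Z]; rewrite in_setU1 => /orP[/eqP->|ZE] tZ; first by left.
  by right; rewrite eG1; apply/genP; exists Z.
- move=> sg tau; rewrite !in_setU1 => /orP[/eqP->|sgE] /orP[/eqP->|tauE] ne.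
  + by rewrite eqxx in ne.
  + by apply: key; rewrite // eq_sym.
  + by rewrite setUC; apply: key.
  + exact: hp1.
Qed.

End Main.

Theorem theorem4p6 (T : finType) (e : rel T)
  (esym : symmetric e) (eirr : irreflexive e) (k : nat) (S : {set T}) :
  ksimplicial e k S ->
  kshellable k (indcomplex e S) ->
  kshellable k (indcomplex e (closedN e S)) ->
  kshellable k (indcomplex e set0).
Proof.
move=> [Sind [P [Ppart [Pk [Padj Psame]]]]] h1 h0.
case: (eqVneq S set0) => [S0|S0]; first by rewrite S0 in h1.
exact: (main_shell esym eirr Sind Ppart Pk Padj Psame S0 h1 h0).
Qed.
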